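(* Let $T$ be a positive integer and $\epsilon = T^{-1/3}$. Consider the forecaster that sets $S_0 = 0$ and, for $t = 1,\ldots,T$, predicts $p_t = 1/2 + \epsilon\cdot\mathrm{sgn}(S_{t-1})$, observes $x_t$, and sets $S_t = S_{t-1} + (x_t - p_t)$. If $x_1,\ldots,x_T$ are independent $\mathrm{Bernoulli}(1/2)$ bits, then $\mathbb{E}[\mathsf{CalDist}(x,p)] \le C\,T^{1/3}$ for a universal constant $C$.
   Context: $\mathrm{sgn}(0) = 0$, $\mathrm{sgn}(y)=1$ for $y>0$, $\mathrm{sgn}(y)=-1$ for $y<0$. For $x \in \{0,1\}^T$, let $\mathcal{C}(x) = \{q \in [0,1]^T : \sum_{t=1}^T (x_t - q_t)\mathbf{1}[q_t = \alpha] = 0 \text{ for all } \alpha \in [0,1]\}$ and $\mathsf{CalDist}(x,p) = \min_{q \in \mathcal{C}(x)} \|p-q\|_1$. *)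

(* Defs.v *)
From mathcomp Require Import all_boot all_order all_algebra.
From mathcomp Require Import all_classical all_reals all_analysis.
Set Implicit Arguments. Unset Strict Implicit. Unset Printing Implicit Defensive.
Import Order.TTheory GRing.Theory Num.Theory.
Local Open Scope classical_set_scope.
Local Open Scope ring_scope.

Section Defs.
Variable R : realType.

(* Bits as reals, 0-based time index: xr x t = x_{t+1} (0 outside range). *)
Definition bitval (T : nat) (x : {ffun 'I_T -> bool}) (t : nat) : R :=
  oapp (fun i : 'I_T => (x i)%:R) 0 (insub t).

Fixpoint Sstate (eps : R) (x : nat -> R) (t : nat) : R :=
  match t with
  | 0 => 0
  | t'.+1 => Sstate eps x t' + (x t' - (2^-1 + eps * Num.sg (Sstate eps x t')))
  end.

(* prediction at (0-based) time t, i.e. p_{t+1} = 1/2 + eps * sgn(S_t) *)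
Definition forecast (eps : R) (x : nat -> R) (t : nat) : R :=
  2^-1 + eps * Num.sg (Sstate eps x t).

Definition preds (T : nat) (x : {ffun 'I_T -> bool}) : 'I_T -> R :=
  fun i => forecast (powR (T%:R) (- 3^-1)) (bitval x) i.

Definition calibrated (T : nat) (x : {ffun 'I_T -> bool}) (q : 'I_T -> R) : Prop :=
  (forall t, 0 <= q t <= 1) /\
  (forall alpha : R, \sum_(t < T) ((x t)%:R - q t) * (q t == alpha)%:R = 0).

Definition CalDist (T : nat) (x : {ffun 'I_T -> bool}) (p : 'I_T -> R) : R :=
  inf [set r | exists q, calibrated x q /\ r = \sum_(t < T) `|p t - q t|].

(* Expectation under i.i.d. Bernoulli(1/2) bits = uniform average. *)
Definition Eunif (T : nat) (f : {ffun 'I_T -> bool} -> R) : R :=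
  (2 ^+ T)^-1 * \sum_(x : {ffun 'I_T -> bool}) f x.
End Defs.

(* Main.v *)
Require Import Defs.
From mathcomp Require Import all_boot all_order all_algebra.
From mathcomp Require Import all_classical all_reals all_analysis.
From mathcomp Require Import ring lra.
Import Order.TTheory GRing.Theory Num.Theory.
Local Open Scope ring_scope.

Set Implicit Arguments. Unset Strict Implicit. Unset Printing Implicit Defensive.


Section S.
Variable R : realType.

Definition flipf (T : nat) (i : 'I_T) (x : {ffun 'I_T -> bool}) : {ffun 'I_T -> bool} :=
  [ffun j => if j == i then ~~ x j else x j].

Lemma flipfK T (i : 'I_T) : involutive (flipf i).
Proof. by move=> x; apply/ffunP=> j; rewrite !ffunE; case: eqP => // _; rewrite negbK. Qed.

Lemma flipf_i T (i : 'I_T) x : flipf i x i = ~~ x i.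
Proof. by rewrite ffunE eqxx. Qed.

Lemma avg_bit T (i : 'I_T) (Phi : bool -> {ffun 'I_T -> bool} -> R) :
  (forall b x, Phi b (flipf i x) = Phi b x) ->
  \sum_(x : {ffun 'I_T -> bool}) Phi (x i) x = \sum_(x : {ffun 'I_T -> bool}) (Phi true x + Phi false x) / 2.
Proof.
move=> Hinv.
have E : \sum_(x : {ffun 'I_T -> bool}) Phi (x i) x = \sum_(x : {ffun 'I_T -> bool}) Phi (~~ x i) x.
  rewrite (reindex_inj (can_inj (flipfK i))) /=.
  by apply: eq_bigr => x _; rewrite flipf_i Hinv.
have E2 : \sum_(x : {ffun 'I_T -> bool}) (Phi true x + Phi false x) =
  \sum_(x : {ffun 'I_T -> bool}) Phi (x i) x + \sum_(x : {ffun 'I_T -> bool}) Phi (~~ x i) x.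
  by rewrite -big_split /=; apply: eq_bigr => x _; case: (x i) => //; rewrite addrC.
rewrite -big_distrl /= E2 -E; lra.
Qed.

Lemma Sstate_ext (e : R) f g n : (forall t, (t < n)%N -> f t = g t) ->
  Sstate e f n = Sstate e g n.
Proof.
elim: n => [//|n IH] H /=.
rewrite IH; last by move=> t lt; apply: H; apply: ltnW.
by rewrite H.
Qed.

Lemma bitval_flip T (i : 'I_T) x t : t != val i ->
  bitval R (flipf i x) t = bitval R x t.
Proof.
move=> ne; rewrite /bitval; case: insubP => [j _ Ej|] //=.
rewrite ffunE; case: eqP => // Eji; by move: ne; rewrite -Ej Eji eqxx.
Qed.

Lemma Sstate_flip (e : R) T (i : 'I_T) x t : (t <= i)%N ->
  Sstate e (bitval R (flipf i x)) t = Sstate e (bitval R x) t.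
Proof.
move=> le; apply: Sstate_ext => u lt; apply: bitval_flip.
by rewrite neq_ltn (leq_trans lt le).
Qed.

Lemma bitval_ord T x (i : 'I_T) : bitval R x i = (x i)%:R.
Proof. by rewrite /bitval insubT //= => H; rewrite (_ : Sub _ _ = i) //; apply: val_inj. Qed.

Lemma Sstate_sumX (e : R) f n :
  Sstate e f n = \sum_(i < n) (f i - forecast e f i).
Proof. elim: n => [|n IH] /=; first by rewrite big_ord0.
by rewrite big_ord_recr /= -IH. Qed.

End S.

Unset Implicit Arguments. Set Strict Implicit.
Set Implicit Arguments. Unset Strict Implicit. Unset Printing Implicit Defensive.


Section S.
Variable R : realType.

Definition ch (y : R) := (expR y + expR (- y)) / 2.

Lemma ch_even y : ch (- y) = ch y.
Proof. by rewrite /ch opprK addrC. Qed.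

Lemma ch_add y u : (ch (y + u) + ch (y - u)) / 2 = ch y * ch u.
Proof.
rewrite /ch opprD opprB !expRD. ring.
Qed.

Lemma expR_ge0' (y : R) : 0 <= expR y.
Proof. exact: ltW (expR_gt0 y). Qed.

Lemma expR_le1' (y : R) : 0 <= y -> expR (- y) <= 1.
Proof.
move=> y0; rewrite expRN invr_le1 ?expR_gt0 ?unitf_gt0 ?expR_gt0 //.
apply: le_trans (expR_ge1Dx y); lra.
Qed.

Lemma ch_ge_abs y : `|y| / 2 <= ch y.
Proof.
rewrite /ch; have := expR_ge1Dx y; have := expR_ge1Dx (- y).
have := expR_ge0' y; have := expR_ge0' (- y).
case: (ler0P y) => _; lra.
Qed.

Lemma ch_ge0 y : 0 <= ch y.
Proof. by apply: le_trans (ch_ge_abs y); apply: divr_ge0. Qed.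

Lemma ch_key u b y : 0 <= b -> 0 <= y ->
  ch u * ch (y - b) <= ch u * expR (- b) * ch y + ch u * (expR b - expR (- b)) / 2.
Proof.
move=> b0 y0.
have Hy : expR (y - b) = expR y * expR (- b) by rewrite expRD.
have Hy2 : expR (- (y - b)) = expR (- y) * expR b by rewrite opprB addrC expRD.
rewrite -subr_ge0 /ch Hy Hy2.
have -> : ch u * expR (- b) * ((expR y + expR (- y)) / 2) +
    ch u * (expR b - expR (- b)) / 2 -
    ch u * ((expR y * expR (- b) + expR (- y) * expR b) / 2)
  = ch u / 2 * ((expR b - expR (- b)) * (1 - expR (- y))).
  rewrite /ch; ring.
apply: mulr_ge0; first by apply: divr_ge0 => //; apply: ch_ge0.
apply: mulr_ge0; rewrite subr_ge0; last exact: expR_le1'.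
apply: (@le_trans _ _ 1); first exact: expR_le1'.
by apply: le_trans (expR_ge1Dx b); lra.
Qed.

Definition rho (e : R) := ch e * expR (- (2 * e ^+ 2)).
Definition Kc (e : R) := ch e * (expR (2 * e ^+ 2) - expR (- (2 * e ^+ 2))) / 2.

Lemma ch_step (e : R) (s : R) (b : bool) : 0 <= e ->
  (ch (2 * e * (s + ((true%:R : R) - (2^-1 + e * Num.sg s)))) +
   ch (2 * e * (s + ((false%:R : R) - (2^-1 + e * Num.sg s))))) / 2
  <= rho e * ch (2 * e * s) + Kc e.
Proof.
move=> e0.
have b0 : 0 <= 2 * e ^+ 2 by apply: mulr_ge0 => //; apply: exprn_ge0.
have -> : 2 * e * (s + ((true%:R : R) - (2^-1 + e * Num.sg s)))
   = (2 * e * s - 2 * e ^+ 2 * Num.sg s) + e by rewrite /=; field.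
have -> : 2 * e * (s + ((false%:R : R) - (2^-1 + e * Num.sg s)))
   = (2 * e * s - 2 * e ^+ 2 * Num.sg s) - e by rewrite /=; field.
rewrite ch_add mulrC /rho /Kc.
case: (sgrP s) => [->|sp|sn].
- rewrite !mulr0 subr0.
  have -> : ch 0 = 1 by rewrite /ch oppr0 expR0; lra.
  have hc := ch_ge0 e.
  have h1 := expR_ge1Dx (2 * e ^+ 2); have h2 := expR_ge1Dx (- (2 * e ^+ 2)).
  set c := ch e in hc *; set E1 := expR (2 * e ^+ 2) in h1 *;
  set E2 := expR (- (2 * e ^+ 2)) in h2 *.
  have H : 0 <= (E1 + E2) / 2 - 1 by lra.
  have := mulr_ge0 hc H; lra.
- rewrite mulr1; apply: ch_key => //; apply: mulr_ge0 => //; lra.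
- have -> : 2 * e * s - 2 * e ^+ 2 * -1 = - (2 * e * (- s) - 2 * e ^+ 2) by ring.
  rewrite ch_even.
  have -> : ch (2 * e * s) = ch (2 * e * (- s)) by rewrite -ch_even; congr ch; ring.
  apply: ch_key => //; apply: mulr_ge0; lra.
Qed.
Lemma expR_mulN (y : R) : expR y * expR (- y) = 1.
Proof. exact: expRxMexpNx_1. Qed.

Lemma subr_ge0_2 (a c : R) : a <= c -> 0 <= c - a.
Proof. by rewrite subr_ge0. Qed.

Lemma le_by_mul (w d p : R) : 0 < d -> w * d <= 1 -> 1 <= d * p -> w <= p.
Proof. move=> d0 h1 h2; rewrite -(ler_pM2r d0); rewrite mulrC in h2; exact: le_trans h1 h2. Qed.

Lemma num_bound (e : R) : 0 <= e -> e <= 4^-1 -> 4 * rho e + Kc e <= 4.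
Proof.
move=> e0 e1.
rewrite /rho /Kc.
set x := e ^+ 2.
have x0 : 0 <= x by rewrite /x; apply: exprn_ge0.
have x1 : x <= 16^-1 by rewrite /x expr2; nra.
have Ee := expR_ge1Dx e; have Ene := expR_ge1Dx (- e).
have Me := expR_mulN e.
have pe := expR_gt0 e; have pne := expR_gt0 (- e).
have Ae : expR e <= 1 + e + e ^+ 2 + 2 * e ^+ 3.
  have h : expR e * (1 - e) <= 1.
    have := mulr_ge0 (ltW pe) (subr_ge0_2 Ene); nra.
  apply: (le_by_mul _ h); first lra.
  rewrite !exprS expr0 !mulr1.
  have : 0 <= e * e * e * (1 - 2 * e) by apply: mulr_ge0; [apply: mulr_ge0; nra|lra].
  nra.
have Ane : expR (- e) <= 1 - e + e ^+ 2.
  have h : expR (- e) * (1 + e) <= 1.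
    have := mulr_ge0 (ltW pne) (subr_ge0_2 Ee); nra.
  apply: (le_by_mul _ h); first lra.
  rewrite !exprS expr0 !mulr1.
  have : 0 <= e * e * e by apply: mulr_ge0; nra.
  nra.
have Ach : ch e <= 1 + x + 4^-1 * x.
  rewrite /ch /x; rewrite !exprS expr0 !mulr1 in Ae *.
  have : e * e * e <= 4^-1 * (e * e) by nra.
  lra.
set b := 2 * x.
have Eb := expR_ge1Dx b; have Enb := expR_ge1Dx (- b).
have Mb := expR_mulN b.
have pb := expR_gt0 b; have pnb := expR_gt0 (- b).
have AP : expR (- b) <= 1 - 2 * x + 4 * x ^+ 2.
  have h : expR (- b) * (1 + b) <= 1.
    have := mulr_ge0 (ltW pnb) (subr_ge0_2 Eb); nra.
  apply: (le_by_mul _ h); first by rewrite /b; lra.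
  rewrite /b expr2.
  have : 0 <= x * x * x by apply: mulr_ge0; nra.
  nra.
have AQ : expR b <= 1 + 2 * x + 8 * x ^+ 2.
  have h : expR b * (1 - b) <= 1.
    have := mulr_ge0 (ltW pb) (subr_ge0_2 Enb); nra.
  apply: (le_by_mul _ h); first by rewrite /b; lra.
  rewrite /b expr2.
  have : 0 <= x * x * (1 - 4 * x) by apply: mulr_ge0; nra.
  nra.
have hc := ch_ge0 e.
have -> : 4 * (ch e * expR (- b)) + ch e * (expR b - expR (- b)) / 2
  = ch e * (7 / 2 * expR (- b) + expR b / 2) by field.
have S0 : 0 <= 7 / 2 * expR (- b) + expR b / 2 by have := ltW pb; have := ltW pnb; lra.
have S1 : 7 / 2 * expR (- b) + expR b / 2 <= 4 - 6 * x + 18 * x ^+ 2 by lra.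
apply: le_trans (ler_pM hc S0 Ach S1) _.
rewrite expr2; nra.
Qed.

End S.

Unset Implicit Arguments. Set Strict Implicit.
Set Implicit Arguments. Unset Strict Implicit. Unset Printing Implicit Defensive.


Section S.
Variable R : realType.
Variable T : nat.
Variable e : R.
Hypothesis e0 : 0 <= e.

Definition SS (x : {ffun 'I_T -> bool}) t := Sstate e (bitval R x) t.
Definition N1 : R := \sum_(x : {ffun 'I_T -> bool}) 1.

Lemma SS_flip (i : 'I_T) x t : (t <= i)%N -> SS (flipf i x) t = SS x t.
Proof. exact: Sstate_flip. Qed.

Lemma SS_succ x (i : 'I_T) : SS x i.+1 = SS x i + ((x i)%:R - (2^-1 + e * Num.sg (SS x i))).
Proof. by rewrite /SS /= bitval_ord. Qed.

Lemma ch_sum_bound (e1 : e <= 4^-1) t : (t <= T)%N ->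
  \sum_(x : {ffun 'I_T -> bool}) ch (2 * e * SS x t) <= 4 * N1.
Proof.
elim: t => [|t IH] lt.
  rewrite /N1 big_distrr /=; apply: ler_sum => x _.
  rewrite /SS /= mulr0 /ch oppr0 expR0; lra.
have ltT : (t < T)%N by [].
pose i := Ordinal ltT.
pose Phi := fun (b : bool) x =>
     ch (2 * e * (SS x t + ((b%:R : R) - (2^-1 + e * Num.sg (SS x t))))).
have -> : \sum_(x : {ffun 'I_T -> bool}) ch (2 * e * SS x t.+1) =
  \sum_(x : {ffun 'I_T -> bool}) Phi (x i) x.
  by apply: eq_bigr => x _; rewrite (SS_succ x i).
rewrite (@avg_bit R T i Phi); last by move=> b x; rewrite /Phi SS_flip.
apply: le_trans (_ : \sum_(x : {ffun 'I_T -> bool}) (rho e * ch (2 * e * SS x t) + Kc e) <= _).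
  by apply: ler_sum => x _; rewrite /Phi; exact: (@ch_step R e _ true e0).
rewrite big_split /= -big_distrr /=.
have -> : \sum_(x : {ffun 'I_T -> bool}) Kc e = Kc e * N1.
  by rewrite /N1 mulr_sumr; apply: eq_bigr => *; rewrite mulr1.
have rho0 : 0 <= rho e.
  by apply: mulr_ge0; [apply: ch_ge0 | exact: ltW (expR_gt0 _)].
have := num_bound e0 e1.
have := ler_wpM2l rho0 (IH (ltnW lt)).
have : 0 <= N1 by rewrite /N1; apply: sumr_ge0.
nra.
Qed.

Lemma absS_sum_bound (e1 : e <= 4^-1) :
  e * \sum_(x : {ffun 'I_T -> bool}) `|SS x T| <= 4 * N1.
Proof.
apply: le_trans (ch_sum_bound e1 (leqnn T)).
rewrite big_distrr /=; apply: ler_sum => x _.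
apply: le_trans (ch_ge_abs _).
rewrite !normrM (ger0_norm e0) ger0_norm //; lra.
Qed.

Definition Mg (P : pred R) x t :=
  \sum_(j < t) ((P (SS x j))%:R : R) * (bitval R x j - 2^-1).

Lemma Mg_sum_bound (P : pred R) t : (t <= T)%N ->
  \sum_(x : {ffun 'I_T -> bool}) (Mg P x t) ^+ 2 <= t%:R / 4 * N1.
Proof.
elim: t => [|t IH] lt.
  rewrite mul0r; under eq_bigr do rewrite /Mg big_ord0 expr2 mulr0.
  by rewrite big1 // mul0r.
have ltT : (t < T)%N by [].
pose i := Ordinal ltT.
pose Phi := fun (b : bool) x =>
     (Mg P x t + ((P (SS x t))%:R : R) * ((b%:R : R) - 2^-1)) ^+ 2.
have -> : \sum_(x : {ffun 'I_T -> bool}) (Mg P x t.+1) ^+ 2 =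
  \sum_(x : {ffun 'I_T -> bool}) Phi (x i) x.
  apply: eq_bigr => x _; rewrite /Mg big_ord_recr /=.
  by rewrite (_ : t = val i) // bitval_ord.
rewrite (@avg_bit R T i Phi); last first.
  move=> b x; rewrite /Phi SS_flip //; congr (_ ^+ 2); congr (_ + _).
  apply: eq_bigr => j _; rewrite SS_flip; last exact: ltnW.
  by rewrite bitval_flip // neq_ltn ltn_ord.
apply: le_trans (_ : \sum_(x : {ffun 'I_T -> bool}) ((Mg P x t) ^+ 2 + 4^-1) <= _).
  apply: ler_sum => x _.
  rewrite /Phi; case: (P (SS x t)) => /=; rewrite ?mul1r ?mul0r; set M := Mg P x t; rewrite !expr2; nra.
rewrite big_split /=.
have -> : \sum_(x : {ffun 'I_T -> bool}) (4^-1 : R) = 4^-1 * N1.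
  by rewrite /N1 mulr_sumr; apply: eq_bigr => *; rewrite mulr1.
have := IH (ltnW lt); rewrite -/N1 -natr1. lra.
Qed.

End S.

Unset Implicit Arguments. Set Strict Implicit.
Set Implicit Arguments. Unset Strict Implicit. Unset Printing Implicit Defensive.


Section S.
Variable R : realType.
Variable T : nat.
Variable X : 'I_T -> R.
Hypothesis X01 : forall t, X t = 0 \/ X t = 1.

Lemma sel (p : R) : 4^-1 <= p <= 3 / 4 -> forall A : {set 'I_T},
  exists B : {set 'I_T}, [/\ B \subset A, `|\sum_(t in B) (X t - p)| <= 1 &
    (#|A|%:R - #|B|%:R : R) <= 4 * `|\sum_(t in A) (X t - p)| + 1].
Proof.
move=> hp A; move: {2}#|A| (leqnn #|A|) => n.
elim: n A => [|n IH] A hA.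
  exists A; split => //.
    move: hA; rewrite leqn0 cards_eq0 => /eqP ->; rewrite big_set0 normr0; lra.
  rewrite subrr; have := normr_ge0 (\sum_(t in A) (X t - p)); lra.
case: (lerP `|\sum_(t in A) (X t - p)| 1) => [h|h].
  exists A; split => //; rewrite subrr; have := normr_ge0 (\sum_(t in A) (X t - p)); lra.
have step : forall t, t \in A ->
    `|\sum_(u in A :\ t) (X u - p)| <= `|\sum_(u in A) (X u - p)| - 4^-1 ->
    exists B : {set 'I_T}, [/\ B \subset A, `|\sum_(t in B) (X t - p)| <= 1 &
    (#|A|%:R - #|B|%:R : R) <= 4 * `|\sum_(t in A) (X t - p)| + 1].
  move=> t tA hs.
  have hA' : (#|A :\ t| <= n)%N by move: hA; rewrite (cardsD1 t A) tA.
  have [B [sB hB cB]] := IH _ hA'.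
  exists B; split => //.
    exact: (fintype.subset_trans sB (subD1set A t)).
  move: cB; rewrite (cardsD1 t A) tA /= natrD; lra.
have [hpos|hneg] : 1 < \sum_(t in A) (X t - p) \/ \sum_(t in A) (X t - p) < -1.
  move: h; rewrite ltr_normr => /orP [h|h]; [left|right]; lra.
- case: (pickP [pred t | (t \in A) && (X t == 1)]) => [t /andP [tA /eqP Xt]|none].
    apply: (step t tA).
    move: hpos; rewrite (big_setD1 t tA) /= Xt => hpos.
    rewrite [X in _ <= X - _]ger0_norm; last lra.
    rewrite ger0_norm; lra.
  exfalso; move: hpos.
  have : \sum_(t in A) (X t - p) <= 0.
    apply: sumr_le0 => t tA; have := none t; rewrite /= tA /=.
    by case: (X01 t) => ->; rewrite ?eqxx //= => _; lra.
  lra.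
- case: (pickP [pred t | (t \in A) && (X t == 0)]) => [t /andP [tA /eqP Xt]|none].
    apply: (step t tA).
    move: hneg; rewrite (big_setD1 t tA) /= Xt => hneg.
    rewrite [X in _ <= X - _]ler0_norm; last lra.
    rewrite ler0_norm; lra.
  exfalso; move: hneg.
  have : 0 <= \sum_(t in A) (X t - p).
    apply: sumr_ge0 => t tA; have := none t; rewrite /= tA /=.
    by case: (X01 t) => ->; rewrite ?eqxx //= => _; lra.
  lra.
Qed.

End S.

Unset Implicit Arguments. Set Strict Implicit.
Set Implicit Arguments. Unset Strict Implicit. Unset Printing Implicit Defensive.


Section S.
Variable R : realType.
Variable T : nat.
Variable x : {ffun 'I_T -> bool}.
Variable L : finType.
Variable lab : 'I_T -> L.

Definition Xb (t : 'I_T) : R := (x t)%:R.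
Definition cnt l : R := \sum_(t | lab t == l) 1.
Definition sx l : R := \sum_(t | lab t == l) Xb t.
Definition mm l : R := sx l / cnt l.

Lemma Xb01 t : 0 <= Xb t <= 1.
Proof. by rewrite /Xb; case: (x t) => /=; lra. Qed.

Lemma sx_bounds l : 0 <= sx l <= cnt l.
Proof.
apply/andP; split; first by apply: sumr_ge0 => t _; have := Xb01 t; lra.
by apply: ler_sum => t _; have := Xb01 t; lra.
Qed.

Lemma cnt_ge0 l : 0 <= cnt l.
Proof. by apply: sumr_ge0 => t _; lra. Qed.

Lemma sx_cnt l : sx l = cnt l * mm l.
Proof.
have := sx_bounds l; rewrite /mm.
have [->|nz] := eqVneq (cnt l) 0.
  by move=> h; rewrite mul0r; lra.
by move=> _; rewrite mulrC divfK.
Qed.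

Lemma mm01 l : 0 <= mm l <= 1.
Proof.
have := sx_bounds l; have := cnt_ge0 l; rewrite /mm.
have [->|nz] := eqVneq (cnt l) 0.
  by move=> _ _; rewrite invr0 mulr0; lra.
move=> c0 /andP [s0 s1]; have cp : 0 < cnt l by rewrite lt_def nz.
apply/andP; split; first by apply: divr_ge0.
by rewrite ler_pdivrMr // mul1r.
Qed.

Lemma class_calibrated : calibrated x (fun t => mm (lab t)).
Proof.
split; first by move=> t; apply: mm01.
move=> alpha.
rewrite (partition_big lab xpredT) //=.
apply: big1 => l _.
rewrite (eq_bigr (fun t => (Xb t - mm l) * (mm l == alpha)%:R)); last first.
  by move=> t /eqP ->.
rewrite -big_distrl /= big_split /= -/(sx l) sumrN.
have -> : \sum_(i | lab i == l) mm l = cnt l * mm l.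
  by rewrite /cnt mulr_suml; apply: eq_bigr => *; rewrite mul1r.
by rewrite -sx_cnt subrr mul0r.
Qed.

Lemma class_cost (P : 'I_T -> R) (c : L -> R) :
  \sum_t `|P t - mm (lab t)| <=
  \sum_t `|P t - c (lab t)| + \sum_l `|\sum_(t | lab t == l) (Xb t - c l)|.
Proof.
apply: le_trans (_ : \sum_t (`|P t - c (lab t)| + `|c (lab t) - mm (lab t)|) <= _).
  apply: ler_sum => t _.
  rewrite (_ : P t - mm (lab t) = (P t - c (lab t)) + (c (lab t) - mm (lab t))); last by ring.
  exact: ler_normD.
rewrite big_split /= lerD2l.
rewrite (partition_big lab xpredT) //=.
apply: ler_sum => l _.
rewrite (eq_bigr (fun _ => `|c l - mm l|)); last by move=> t /eqP ->.
have -> : \sum_(t | lab t == l) `|c l - mm l| = cnt l * `|c l - mm l|.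
  by rewrite /cnt mulr_suml; apply: eq_bigr => *; rewrite mul1r.
have -> : \sum_(t | lab t == l) (Xb t - c l) = cnt l * (mm l - c l).
  rewrite big_split /= -/(sx l) sumrN sx_cnt.
  have -> : \sum_(i | lab i == l) c l = cnt l * c l.
    by rewrite /cnt mulr_suml; apply: eq_bigr => *; rewrite mul1r.
  by rewrite mulrBr.
by rewrite normrM (ger0_norm (cnt_ge0 l)) distrC.
Qed.

End S.

Lemma CalDist_le (R : realType) T (x : {ffun 'I_T -> bool}) (P q : 'I_T -> R) :
  calibrated x q -> CalDist x P <= \sum_t `|P t - q t|.
Proof.
move=> hq; rewrite /CalDist; apply: ge_inf; last by exists q.
exists 0 => r [q' [_ ->]]; apply: sumr_ge0 => t _; exact: normr_ge0.
Qed.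

Unset Implicit Arguments. Set Strict Implicit.
Set Implicit Arguments. Unset Strict Implicit. Unset Printing Implicit Defensive.


Section S.
Variable R : realType.
Variable T : nat.
Variable x : {ffun 'I_T -> bool}.

Lemma sum_opt (F : option bool -> R) :
  \sum_(l : option bool) F l = F (Some true) + F (Some false) + F None.
Proof.
rewrite (bigD1 (Some true)) //= (bigD1 (Some false)) //= (bigD1 None) //=.
rewrite big_pred0; first by rewrite addr0 addrA.
by case=> [[]|].
Qed.

Lemma card_sum (A : {set 'I_T}) : \sum_t ((t \in A)%:R : R) = #|A|%:R.
Proof.
rewrite -sum1_card natr_sum [RHS]big_mkcond /=.
by apply: eq_bigr => t _; case: (t \in A).
Qed.

Lemma sum_in (A : {set 'I_T}) (f : 'I_T -> R) :
  \sum_(t in A) f t = \sum_t ((t \in A)%:R * f t).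
Proof.
rewrite [LHS]big_mkcond /=; apply: eq_bigr => t _.
by case: (t \in A); rewrite ?mul1r ?mul0r.
Qed.

Lemma X01' t : Xb R x t = 0 :> R \/ Xb R x t = 1.
Proof. by rewrite /Xb; case: (x t); [right|left]. Qed.

Lemma norm4 (a b c d : R) : `|a + b - c - d| <= `|a| + `|b| + `|c| + `|d|.
Proof.
apply: (le_trans (ler_normB _ _)); rewrite lerD2r.
apply: (le_trans (ler_normB _ _)); rewrite lerD2r.
exact: ler_normD.
Qed.

Lemma cost_main (s : 'I_T -> R) (e : R) : 0 <= e -> e <= 4^-1 ->
  CalDist x (fun t => 2^-1 + e * Num.sg (s t)) <=
  4 + 4 * e + `|\sum_t (Xb R x t - (2^-1 + e * Num.sg (s t)))|
  + 8 * e * (`|\sum_t ((((0 < s t)%R : bool)%:R : R) * (Xb R x t - 2^-1))|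
           + `|\sum_t ((((s t < 0)%R : bool)%:R : R) * (Xb R x t - 2^-1))|)
  + 8 * e ^+ 2 * T%:R.
Proof.
move=> e0 e1.
set P := fun t => 2^-1 + e * Num.sg (s t).
pose Gp := [set t | (0 < s t)%R]; pose Gn := [set t | (s t < 0)%R].
have [Bp [sBp hBp cBp]] := @sel R T (Xb R x) X01' (2^-1 + e) ltac:(apply/andP; split; lra) Gp.
have [Bn [sBn hBn cBn]] := @sel R T (Xb R x) X01' (2^-1 - e) ltac:(apply/andP; split; lra) Gn.
pose lab t : option bool := if t \in Bp then Some true else if t \in Bn then Some false else None.
pose c (l : option bool) : R := match l with Some true => 2^-1 + e | Some false => 2^-1 - e | None => 2^-1 end.
have inBp t : t \in Bp -> 0 < s t.
  by move=> /(fintype.subsetP sBp); rewrite inE.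
have inBn t : t \in Bn -> s t < 0.
  by move=> /(fintype.subsetP sBn); rewrite inE.
apply: le_trans (CalDist_le _ (class_calibrated R x lab)) _.
apply: le_trans (class_cost x lab P c) _.
rewrite sum_opt.
pose W := e * (#|Gp|%:R - #|Bp|%:R + #|Gn|%:R - #|Bn|%:R).
have HW : \sum_t `|P t - c (lab t)| <= W.
  apply: le_trans (_ : \sum_t e * ((t \in Gp)%:R - (t \in Bp)%:R + (t \in Gn)%:R - (t \in Bn)%:R) <= _).
    apply: ler_sum => t _; rewrite /P /lab /c /Gp /Gn !inE.
    have [h|h|h] := ltgtP (s t) 0;
      [rewrite ltr0_sg // | rewrite gtr0_sg // | rewrite h sgr0];
    case kBp: (t \in Bp); case kBn: (t \in Bn) => /=;
    (try have i1 := inBp t kBp); (try have i2 := inBn t kBn);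
    rewrite ler_norml; apply/andP; split; lra.
  rewrite -big_distrr /= !big_split /= !sumrN !card_sum.
  by rewrite /W.
set S := \sum_t (Xb R x t - (2^-1 + e * Num.sg (s t))).
set Mp := \sum_t (((0 < s t)%R : bool)%:R * (Xb R x t - 2^-1)).
set Mn := \sum_t (((s t < 0)%R : bool)%:R * (Xb R x t - 2^-1)).
have E1 : \sum_(t | lab t == Some true) (Xb R x t - c (Some true))
    = \sum_(t in Bp) (Xb R x t - (2^-1 + e)).
  apply: eq_bigl => t; rewrite /lab; case kb: (t \in Bp) => //=.
  by case: (t \in Bn).
have E2 : \sum_(t | lab t == Some false) (Xb R x t - c (Some false))
    = \sum_(t in Bn) (Xb R x t - (2^-1 - e)).
  apply: eq_bigl => t; rewrite /lab; case kb: (t \in Bp); case kn: (t \in Bn) => //=.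
  have h1 := inBp t kb; have h2 := inBn t kn; exfalso; lra.
have Hall : \sum_(t | lab t == Some true) (Xb R x t - c (Some true))
    + \sum_(t | lab t == Some false) (Xb R x t - c (Some false))
    + \sum_(t | lab t == None) (Xb R x t - c None)
    = \sum_t (Xb R x t - c (lab t)).
  rewrite [RHS](partition_big lab xpredT) //= sum_opt.
  by congr (_ + _ + _); apply: eq_bigr => t /eqP ->.
have Hsplit : \sum_t (Xb R x t - c (lab t)) = S + \sum_t (P t - c (lab t)).
  by rewrite /S -big_split /=; apply: eq_bigr => t _; rewrite /P; ring.
have Hn : `|\sum_t (P t - c (lab t))| <= W by apply: le_trans (ler_norm_sum _ _ _) HW.
have HR3 : `|\sum_(t | lab t == None) (Xb R x t - c None)| <=
    `|S| + W + `|\sum_(t in Bp) (Xb R x t - (2^-1 + e))| + `|\sum_(t in Bn) (Xb R x t - (2^-1 - e))|.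
  have -> : \sum_(t | lab t == None) (Xb R x t - c None) =
     S + \sum_t (P t - c (lab t)) - \sum_(t in Bp) (Xb R x t - (2^-1 + e))
       - \sum_(t in Bn) (Xb R x t - (2^-1 - e)).
    rewrite -Hsplit -Hall E1 E2; ring.
  apply: le_trans (norm4 _ _ _ _) _.
  by rewrite !lerD2r lerD2l.
have Dp : \sum_(t in Gp) (Xb R x t - (2^-1 + e)) = Mp - e * #|Gp|%:R.
  rewrite sum_in -card_sum mulr_sumr /Mp -sumrB; apply: eq_bigr => t _.
  rewrite /Gp inE; ring.
have Dn : \sum_(t in Gn) (Xb R x t - (2^-1 - e)) = Mn + e * #|Gn|%:R.
  rewrite sum_in -card_sum mulr_sumr /Mn -big_split /=; apply: eq_bigr => t _.
  rewrite /Gn inE; ring.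
have Hcard : (#|Gp|%:R + #|Gn|%:R : R) <= T%:R.
  rewrite -!card_sum -big_split /=.
  have -> : (T%:R : R) = \sum_(t < T) (1 : R) by rewrite sumr_const card_ord.
  apply: ler_sum => t _; rewrite /Gp /Gn !inE.
  by have [h|h|h] := ltgtP (s t) 0 => /=; lra.
have ge0Gp : (0 : R) <= #|Gp|%:R by apply: ler0n.
have ge0Gn : (0 : R) <= #|Gn|%:R by apply: ler0n.
have nDp : `|\sum_(t in Gp) (Xb R x t - (2^-1 + e))| <= `|Mp| + e * #|Gp|%:R.
  rewrite Dp; apply: le_trans (ler_normB _ _) _.
  by rewrite (ger0_norm (mulr_ge0 e0 _)) //; apply: ler0n.
have nDn : `|\sum_(t in Gn) (Xb R x t - (2^-1 - e))| <= `|Mn| + e * #|Gn|%:R.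
  rewrite Dn; apply: le_trans (ler_normD _ _) _.
  by rewrite (ger0_norm (mulr_ge0 e0 _)) //; apply: ler0n.
have hW2 : W <= e * (4 * (`|Mp| + e * #|Gp|%:R) + 1 + 4 * (`|Mn| + e * #|Gn|%:R) + 1).
  rewrite /W; apply: ler_wpM2l => //; lra.
have hT : e ^+ 2 * (#|Gp|%:R + #|Gn|%:R) <= e ^+ 2 * T%:R.
  by apply: ler_wpM2l => //; apply: exprn_ge0.
move: hW2 hT HR3 HW hBp hBn; rewrite E1 E2 expr2.
set a := `|\sum_(t in Bp) _|; set b := `|\sum_(t in Bn) _|.
move=> hW2 hT HR3 HW hBp hBn.
nra.
Qed.

End S.

Unset Implicit Arguments. Set Strict Implicit.


Lemma N1E (R : realType) T : N1 R T = 2 ^+ T.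
Proof.
by rewrite /N1 sumr_const card_ffun card_bool card_ord -natrX.
Qed.

Lemma per_x_main (R : realType) T (x : {ffun 'I_T -> bool}) (e : R) :
  0 <= e -> e <= 4^-1 ->
  CalDist x (fun i => forecast e (bitval R x) i) <=
  4 + 4 * e + `|SS e x T| + 8 * e * (`|Mg e (fun r => 0 < r) x T| + `|Mg e (fun r => r < 0) x T|)
  + 8 * e ^+ 2 * T%:R.
Proof.
move=> e0 e1.
have := cost_main x (fun t : 'I_T => Sstate e (bitval R x) t) e0 e1.
have -> : \sum_(t : 'I_T) (Xb R x t - (2^-1 + e * Num.sg (Sstate e (bitval R x) t))) = SS e x T.
  by rewrite /SS Sstate_sumX; apply: eq_bigr => t _; rewrite bitval_ord.
have -> : \sum_(t : 'I_T) (((0 < Sstate e (bitval R x) t)%R : bool)%:R * (Xb R x t - 2^-1))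
   = Mg e (fun r => 0 < r) x T.
  by rewrite /Mg; apply: eq_bigr => t _; rewrite bitval_ord.
have -> : \sum_(t : 'I_T) (((Sstate e (bitval R x) t < 0)%R : bool)%:R * (Xb R x t - 2^-1))
   = Mg e (fun r => r < 0) x T.
  by rewrite /Mg; apply: eq_bigr => t _; rewrite bitval_ord.
done.
Qed.

Lemma per_x_small (R : realType) T (x : {ffun 'I_T -> bool}) (e : R) :
  0 <= e -> e <= 1 ->
  CalDist x (fun i => forecast e (bitval R x) i) <= 2 * T%:R.
Proof.
move=> e0 e1.
pose lab := fun _ : 'I_T => (None : option bool).
pose c := fun _ : option bool => (2^-1 : R).
apply: le_trans (CalDist_le _ (class_calibrated R x lab)) _.
apply: le_trans (class_cost x lab _ c) _.
have z : forall b, \sum_(t | lab t == Some b) (Xb R x t - c (Some b)) = 0.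
  by move=> b; apply: big1.
rewrite sum_opt !z normr0 !add0r.
have hT : (T%:R : R) = \sum_(t < T) (1 : R) by rewrite sumr_const card_ord.
apply: le_trans (_ : \sum_(t < T) (1 : R) + \sum_(t < T) (1 : R) <= _); last by rewrite -hT; lra.
apply: lerD.
  apply: ler_sum => t _; rewrite /forecast /c.
  by case: (sgrP (Sstate e (bitval R x) t)) => _; rewrite ler_norml; apply/andP; split; lra.
apply: le_trans (ler_norm_sum _ _ _) _.
apply: ler_sum => t _; rewrite /Xb /c; case: (x t) => /=; rewrite ler_norml; apply/andP; split; lra.
Qed.

Lemma sum_constx (R : realType) T (a : R) :
  \sum_(x : {ffun 'I_T -> bool}) a = a * N1 R T.
Proof. by rewrite /N1 mulr_sumr; apply: eq_bigr => *; rewrite mulr1. Qed.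

Theorem corollary1 (R : realType) :
  exists C : R, forall T : nat, (0 < T)%N ->
    Eunif (fun x : {ffun 'I_T -> bool} => CalDist x (@preds R T x))
      <= C * powR (T%:R) (3^-1).
Proof.
exists 128 => T T0.
have Tp : (0 : R) < T%:R by rewrite ltr0n.
have T1 : (1 : R) <= T%:R by rewrite ler1n.
set e := powR (T%:R : R) (- 3^-1).
set u := powR (T%:R : R) (3^-1).
have e0 : 0 < e by apply: powR_gt0.
have eu : e * u = 1.
  rewrite /e /u -powRD; first by rewrite addNr powRr0.
  by rewrite addNr eqxx /= pnatr_eq0 -lt0n.
have u1 : 1 <= u by rewrite /u -{1}(powRr0 (T%:R : R)); apply: ler_powR => //; lra.
have e3 : e ^+ 3 * T%:R = 1.
  rewrite -powR_mulrn; last exact: ltW.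
  rewrite /e -powRrM (_ : - 3^-1 * 3%:R = -1); last by field.
  rewrite powR_inv1 ?mulVf //; last by lra.
have e1 : e <= 1 by nra.
have N0 : (0 : R) < N1 R T by rewrite N1E exprn_gt0.
rewrite /Eunif -N1E.
rewrite /preds -/e.
suff H : \sum_(x : {ffun 'I_T -> bool}) CalDist x (fun i => forecast e (bitval R x) i)
    <= 128 * u * N1 R T.
  by rewrite ler_pdivrMl // mulrC.
have [e4|e4] := lerP e 4^-1.
- pose A := 4 + 4 * e + 8 * u + 8 * u.
  have hA : 4 + 4 * e + 8 * e ^+ 2 * T%:R + 8 * e * u ^+ 2 = A.
    have e2T : e ^+ 2 * T%:R = u.
      transitivity (e ^+ 2 * T%:R * (e * u)); first by rewrite eu mulr1.
      transitivity (e ^+ 3 * T%:R * u); first by ring.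
      by rewrite e3 mul1r.
    have eu2 : e * u ^+ 2 = u by rewrite expr2 mulrA eu mul1r.
    by rewrite /A -mulrA e2T -mulrA eu2.
  apply: le_trans (_ : \sum_(x : {ffun 'I_T -> bool})
     (A + `|SS e x T|
      + (4 * e ^+ 3) * (Mg e (fun r => 0 < r) x T) ^+ 2
      + (4 * e ^+ 3) * (Mg e (fun r => r < 0) x T) ^+ 2) <= _).
    apply: ler_sum => x _.
    apply: le_trans (@per_x_main R T x e (ltW e0) e4) _; rewrite -hA.
    have hM : forall M : R, 8 * e * `|M| <= 4 * e ^+ 3 * M ^+ 2 + 4 * e * u ^+ 2.
      move=> M.
      have h : 0 <= 4 * e * (e * `|M| - u) ^+ 2.
        by apply: mulr_ge0; rewrite ?sqr_ge0 //; lra.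
      have h2 : `|M| ^+ 2 = M ^+ 2 by rewrite real_normK ?num_real.
      rewrite -h2; move: h; rewrite !expr2 !exprS expr0 !mulr1 => h.
      have k : e * e * u * `|M| = e * `|M| by rewrite -(mulrA e e u) eu mulr1.
      set m := `|M| in h k *.
      have -> : 4 * (e * (e * e)) * (m * m) = 4 * e * ((e * m) * (e * m)) by ring.
      have : 4 * e * ((e * m - u) * (e * m - u)) = 4 * e * ((e * m) * (e * m)) - 8 * (e * e * u * m) + 4 * e * (u * u) by ring.
      lra.
    have := hM (Mg e (fun r => 0 < r) x T); have := hM (Mg e (fun r => r < 0) x T).
    lra.
  
  rewrite !big_split /= sum_constx -!mulr_sumr.
  have hS := absS_sum_bound T (ltW e0) e4.
  have hP := Mg_sum_bound e (fun r => 0 < r) (leqnn T).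
  have hN := Mg_sum_bound e (fun r => r < 0) (leqnn T).
  set SA := \sum_(x : {ffun 'I_T -> bool}) `|SS e x T| in hS *.
  set SP := \sum_(x : {ffun 'I_T -> bool}) Mg e (fun r => 0 < r) x T ^+ 2 in hP *.
  set SN := \sum_(x : {ffun 'I_T -> bool}) Mg e (fun r => r < 0) x T ^+ 2 in hN *.
  set N := N1 R T in hS hP hN N0 *.
  have hSA : SA <= 4 * u * N.
    have : u * (e * SA) <= u * (4 * N) by apply: ler_wpM2l => //; lra.
    by rewrite mulrA (mulrC u e) eu mul1r; lra.
  have e2T : e ^+ 2 * T%:R = u.
    transitivity (e ^+ 2 * T%:R * (e * u)); first by rewrite eu mulr1.
    transitivity (e ^+ 3 * T%:R * u); first by ring.
    by rewrite e3 mul1r.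
  have eu2 : e * u ^+ 2 = u by rewrite expr2 mulrA eu mul1r.
  have hP' : 4 * e ^+ 3 * SP <= e ^+ 3 * T%:R * N.
    have c0 : 0 <= 4 * e ^+ 3 by apply: mulr_ge0; [lra | apply: exprn_ge0; exact: ltW].
    apply: le_trans (ler_wpM2l c0 hP) _.
    by rewrite (_ : 4 * e ^+ 3 * (T%:R / 4 * N) = e ^+ 3 * T%:R * N) //; field.
  have hN' : 4 * e ^+ 3 * SN <= e ^+ 3 * T%:R * N.
    have c0 : 0 <= 4 * e ^+ 3 by apply: mulr_ge0; [lra | apply: exprn_ge0; exact: ltW].
    apply: le_trans (ler_wpM2l c0 hN) _.
    by rewrite (_ : 4 * e ^+ 3 * (T%:R / 4 * N) = e ^+ 3 * T%:R * N) //; field.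
  rewrite e3 mul1r in hP' hN'.
  rewrite !sum_constx -/N.
  have h1 : e * N <= u * N by apply: ler_wpM2r; lra.
  have h2 : 1 * N <= u * N by apply: ler_wpM2r; lra.
  lra.
- have T64 : (T%:R : R) < 64.
    have : 4^-1 ^+ 3 < e ^+ 3 by rewrite ltrXn2r //; lra.
    move: e3; rewrite !exprS expr0 !mulr1 => e3 h; nra.
  apply: le_trans (_ : \sum_(x : {ffun 'I_T -> bool}) 2 * T%:R <= _).
    by apply: ler_sum => x _; apply: (@per_x_small R T x e) => //; apply: ltW.
  rewrite sum_constx; nra.
Qed.
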